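(* Let $A$ be a finite abelian group of even order. The trivial subgroup $\{0\}$ of $A$ is a subgroup perfect code of $A$ if and only if $A$ is an elementary abelian $2$-group.
   Context: $A$ is written additively with identity $0$. An element $x$ of $A$ is a square if $x=2y$ for some $y\in A$; a subset is square-free if it contains no squares. For a square-free $T\subseteq A$, the Cayley sum graph $\mathrm{CayS}(A,T)$ is the simple graph with vertex set $A$ in which distinct $x,y$ are adjacent iff $x+y\in T$. A subset $C$ of the vertex set of a graph is a perfect code if every vertex is at distance at most one from exactly one vertex of $C$. A subgroup $H$ of $A$ is a subgroup perfect code of $A$ if $H$ is a perfect code of $\mathrm{CayS}(A,T)$ for some square-free $T\subseteq A$ (the empty set allowed). *)

(* Defs.v *)
From mathcomp Require Import all_boot all_order all_algebra all_fingroup all_solvable.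
Set Implicit Arguments. Unset Strict Implicit. Unset Printing Implicit Defensive.
Import GRing.Theory.
Local Open Scope ring_scope.

Definition is_square (A : finZmodType) (x : A) : Prop := exists y : A, x = y *+ 2.

Definition square_free (A : finZmodType) (T : {set A}) : Prop :=
  forall x : A, x \in T -> ~ is_square x.

Definition cays_adj (A : finZmodType) (T : {set A}) : rel A :=
  fun x y => (x != y) && (x + y \in T).

Definition perfect_code (V : finType) (e : rel V) (C : {set V}) : Prop :=
  forall v : V, #|[set c in C | (v == c) || e v c]| = 1%N.

Definition subgroup_perfect_code (A : finZmodType) (H : {set A}) : Prop :=
  exists T : {set A}, square_free T /\ perfect_code (cays_adj T) H.

(* Main.v *)
Require Import Defs.
From mathcomp Require Import all_boot all_order all_algebra all_fingroup all_solvable.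
Import GRing.Theory.
Local Open Scope ring_scope.

Lemma abelem2_iff (A : finZmodType) :
  (2.-abelem [set: A])%g <-> (forall x : A, x *+ 2 = 0).
Proof.
split.
  move=> /(abelemP (isT : prime 2)) [_ H] x.
  by rewrite -FinRing.zmodXgE H ?inE // FinRing.zmod1gE.
move=> H; apply/(abelemP (isT : prime 2)); split.
  exact: FinRing.zmod_abelian.
by move=> x _; rewrite FinRing.zmodXgE FinRing.zmod1gE H.
Qed.

Theorem corollary3p7 (A : finZmodType) (Heven : ~~ odd #|A|) :
  subgroup_perfect_code [set (0 : A)] <-> (2.-abelem [set: A])%g.
Proof.
apply: (iff_trans _ (iff_sym (abelem2_iff A))); split.
  move=> [T [sqf pc]] x.
  have [//|nz] := eqVneq (x *+ 2) 0.
  exfalso; have := pc (x *+ 2).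
  have -> : [set c in [set (0 : A)] | (x *+ 2 == c) || cays_adj T (x *+ 2) c]
          = set0.
    apply/setP => c; rewrite !inE.
    case: (eqVneq c 0) => [->|] //=; rewrite (negbTE nz) /cays_adj nz addr0 /=.
    case: (boolP (x *+ 2 \in T)) => // /sqf; case; by exists x.
  by rewrite cards0.
move=> H; exists (~: [set (0 : A)]); split.
  move=> x; rewrite !inE => nx [y Hy]; by rewrite Hy H eqxx in nx.
move=> v.
have -> : [set c in [set (0 : A)] | (v == c) || cays_adj (~: [set (0 : A)]) v c]
        = [set 0].
  apply/setP => c; rewrite !inE.
  case: (eqVneq c 0) => [->|] //=; rewrite /cays_adj !inE addr0 /=.
  by case: (v == 0).
by rewrite cards1.
Qed.
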